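(* Consider the MAC-phase training model described in the context, with training length $L_S$ and minimum-mean-square-error $e_R(\mathbf S)$. (i) If $L_S\ge N_1+N_2$, then for every $\varepsilon>0$ there exists $\mathbf S\in\mathbb C^{(N_1+N_2)\times L_S}$ (with no bound on the powers $\mathrm{Tr}(\mathbf S_i\mathbf S_i^H)$) such that $e_R(\mathbf S)<\varepsilon$; i.e. an arbitrarily small MSE can be achieved with unlimited source power when $L_S= N_1+N_2$. (ii) If $L_S<N_1+N_2$, then for every $\mathbf S\in\mathbb C^{(N_1+N_2)\times L_S}$ (in particular even with unlimited source power) $$e_R(\mathbf S)\;\ge\;\sum_{n=1}^{M}\sigma_{r,H,n}\sum_{m=L_S+1}^{N_1+N_2}\sigma_{t,H,m},$$ where $\sigma_{r,H,1},\dots,\sigma_{r,H,M}$ are the eigenvalues of $\mathbf Z_{r,H}$ and $\sigma_{t,H,1}\ge\dots\ge\sigma_{t,H,N_1+N_2}$ are the eigenvalues of $\mathbf Z_{t,H}=\mathrm{Blkdiag}(\mathbf Z_{t,H_1},\mathbf Z_{t,H_2})$ in decreasing order. (iii) Suppose $\mathbf K_{q,R}=q\mathbf I_{L_S}$ with $q>0$, let $\tau_1,\tau_2>0$, and let $\mathbf S^{\rm opt}=[\mathbf S_1^{T},\mathbf S_2^{T}]^T$ be an optimal solution of $\min_{\mathbf S} e_R(\mathbf S)$ subject to $\mathrm{Tr}(\mathbf S_i\mathbf S_i^H)\le\tau_i$, $i=1,2$, with $\mathrm{Rank}(\mathbf S^{\rm opt})=r$. Then there exist $\tilde{\mathbf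 S}_1\in\mathbb C^{N_1\times r}$, $\tilde{\mathbf S}_2\in\mathbb C^{N_2\times r}$ with $\mathrm{Tr}(\tilde{\mathbf S}_i\tilde{\mathbf S}_i^H)=\mathrm{Tr}(\mathbf S_i\mathbf S_i^H)$, $i=1,2$, such that the MSE of the same model with training length $r$ (and temporal disturbance covariance $q\mathbf I_r$) evaluated at $\tilde{\mathbf S}=[\tilde{\mathbf S}_1^T,\tilde{\mathbf S}_2^T]^T$ equals $e_R(\mathbf S^{\rm opt})$; i.e. the training length can be reduced to $L_S=r$.
   Context: MAC phase of a MIMO two-way relay system: sources $S_1,S_2$ with $N_1,N_2$ antennas, relay with $M$ antennas. Let $\mathbf Z_{t,H_i}\in\mathbb C^{N_i\times N_i}$ ($i=1,2$) and $\mathbf Z_{r,H}\in\mathbb C^{M\times M}$ be Hermitian positive definite, with factorizations $\mathbf Z_{t,H_i}=\mathbf C_{t,H_i}\mathbf C_{t,H_i}^H$, $\mathbf Z_{r,H}=\mathbf C_{r,H}\mathbf C_{r,H}^H$ (square invertible factors); put $\mathbf C_{t,H}=\mathrm{Blkdiag}(\mathbf C_{t,H_1},\mathbf C_{t,H_2})$. The channels are $\mathbf H_i=\mathbf C_{r,H}\mathbf W_{H_i}\mathbf C_{t,H_i}^T\in\mathbb C^{M\times N_i}$ with $\mathbf W_{H_1},\mathbf W_{H_2}$ having i.i.d. $\mathcal{CN}(0,1)$ entries. The relay receives $\mathbf Y_R=\mathbf H_1\mathbf S_1+\mathbf H_2\mathbf S_2+\mathbf N_R$, where $\mathbf S_i\in\mathbb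 C^{N_i\times L_S}$ are training sequences, $\mathbf S=[\mathbf S_1^T,\mathbf S_2^T]^T$, and $\mathrm{vec}(\mathbf N_R)\sim\mathcal{CN}(\mathbf 0,\mathbf K_R)$ independent of the channels, $\mathbf K_R=\mathbf K_{q,R}\otimes\mathbf K_{r,R}$ with $\mathbf K_{q,R}\in\mathbb C^{L_S\times L_S}$, $\mathbf K_{r,R}\in\mathbb C^{M\times M}$ Hermitian positive definite, and $\mathbf K_{r,R}$ has the same eigenvectors as $\mathbf Z_{r,H}$. The (linear) MMSE estimation error of $\mathrm{vec}([\mathbf H_1,\mathbf H_2])$ is $e_R(\mathbf S)=\mathrm{Tr}\big[\mathbf C_{0,H}\big(\mathbf I+\mathbf F^H\mathbf K_R^{-1}\mathbf F\big)^{-1}\big]$ with $\mathbf F=\mathbf S^T\mathbf C_{t,H}\otimes\mathbf C_{r,H}$ and $\mathbf C_{0,H}=\mathbf C_{t,H}^H\mathbf C_{t,H}\otimes\mathbf C_{r,H}^H\mathbf C_{r,H}$. *)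

(* Defs.v *)
(* Complex scalars: an arbitrary numClosedFieldType C
   (e.g. algC, or R[i] for a real closed field R). *)
From mathcomp Require Import all_boot all_order all_algebra.
From mathcomp Require Export mxtens.
Set Implicit Arguments. Unset Strict Implicit. Unset Printing Implicit Defensive.
Import Order.TTheory GRing.Theory Num.Theory.
Local Open Scope ring_scope.

Definition ctmx (C : numClosedFieldType) m n (A : 'M[C]_(m, n)) : 'M[C]_(n, m) :=
  (map_mx Num.conj A)^T.

Definition posdef (C : numClosedFieldType) n (A : 'M[C]_n) : Prop :=
  ctmx A = A /\ forall x : 'cV[C]_n, x != 0 -> 0 < (ctmx x *m A *m x) 0 0.

Definition unitary (C : numClosedFieldType) n (U : 'M[C]_n) : Prop :=
  U *m ctmx U = 1%:M.

(* Z and K have the same eigenvectors: simultaneously unitarily diagonalizable *)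
Definition same_eigvecs (C : numClosedFieldType) n (Z K : 'M[C]_n) : Prop :=
  exists (U : 'M[C]_n) (a b : 'rV[C]_n), unitary U /\
    Z = U *m diag_mx a *m ctmx U /\ K = U *m diag_mx b *m ctmx U.

Definition eigvals_of (C : numClosedFieldType) n (A : 'M[C]_n) (s : 'rV[C]_n) : Prop :=
  char_poly A = \prod_(i < n) ('X - (s 0 i)%:P).

Definition blkdiag (C : numClosedFieldType) n1 n2 (A : 'M[C]_n1) (B : 'M[C]_n2)
  : 'M[C]_(n1 + n2) := block_mx A 0 0 B.

Definition eR (C : numClosedFieldType) (N1 N2 M LS : nat)
  (Ct1 : 'M[C]_N1) (Ct2 : 'M[C]_N2) (Cr : 'M[C]_M)
  (Kq : 'M[C]_LS) (Kr : 'M[C]_M) (S : 'M[C]_(N1 + N2, LS)) : C :=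
  let Ct := blkdiag Ct1 Ct2 in
  let F := (S^T *m Ct) *t Cr in
  let KR := Kq *t Kr in
  let C0 := (ctmx Ct *m Ct) *t (ctmx Cr *m Cr) in
  \tr (C0 *m invmx (1%:M + ctmx F *m invmx KR *m F)).

Definition pow_mx (C : numClosedFieldType) m n (A : 'M[C]_(m, n)) : C :=
  \tr (A *m ctmx A).

(* Main.v *)
Require Import Defs.
From mathcomp Require Import all_boot all_order all_algebra.
From mathcomp Require Import spectral ring.
Import Order.TTheory GRing.Theory Num.Theory.
Local Open Scope ring_scope.
Set Implicit Arguments. Unset Strict Implicit. Unset Printing Implicit Defensive.

Lemma ctE (C : numClosedFieldType) m n (A : 'M[C]_(m,n)) :
  ctmx A = \matrix_(i, j) (A j i)^*.
Proof. by apply/matrixP=> i j; rewrite !mxE. Qed.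

Lemma ctK (C : numClosedFieldType) m n (A : 'M[C]_(m,n)) : ctmx (ctmx A) = A.
Proof. by apply/matrixP=> i j; rewrite !ctE !mxE conjCK. Qed.

Lemma ct_mul (C : numClosedFieldType) m n p (A : 'M[C]_(m,n)) (B : 'M[C]_(n,p)) :
  ctmx (A *m B) = ctmx B *m ctmx A.
Proof. by rewrite /ctmx map_mxM trmx_mul. Qed.

Lemma ct_add (C : numClosedFieldType) m n (A B : 'M[C]_(m,n)) :
  ctmx (A + B) = ctmx A + ctmx B.
Proof. by apply/matrixP=> i j; rewrite !ctE !mxE rmorphD. Qed.

Lemma ct_scale (C : numClosedFieldType) m n (a : C) (A : 'M[C]_(m,n)) :
  ctmx (a *: A) = a^* *: ctmx A.
Proof. by apply/matrixP=> i j; rewrite !ctE !mxE rmorphM. Qed.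

Lemma ct_scalar (C : numClosedFieldType) n (a : C) :
  ctmx (a%:M : 'M[C]_n) = (a^*)%:M.
Proof.
by apply/matrixP=> i j; rewrite !ctE !mxE rmorphMn eq_sym.
Qed.

Lemma ct1 (C : numClosedFieldType) n : ctmx (1%:M : 'M[C]_n) = 1%:M.
Proof. by rewrite ct_scalar rmorph1. Qed.

Lemma ct_tens (C : numClosedFieldType) m n p q (A : 'M[C]_(m,n)) (B : 'M[C]_(p,q)) :
  ctmx (A *t B) = ctmx A *t ctmx B.
Proof. by apply/matrixP=> i j; rewrite !ctE !mxE rmorphM. Qed.

Lemma ct_diag (C : numClosedFieldType) n (d : 'rV[C]_n) :
  ctmx (diag_mx d) = diag_mx (\row_i (d 0 i)^*).
Proof.
apply/matrixP=> i j; rewrite !ctE !mxE.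
by case: (eqVneq i j) => [->|h]; rewrite ?mulr1n ?mulr0n ?rmorph0.
Qed.

Lemma ct_tr (C : numClosedFieldType) m n (A : 'M[C]_(m,n)) :
  ctmx A^T = map_mx Num.conj A.
Proof. by apply/matrixP=> i j; rewrite !ctE !mxE. Qed.

Lemma ct_col (C : numClosedFieldType) m1 m2 n (A : 'M[C]_(m1,n)) (B : 'M[C]_(m2,n)) :
  ctmx (col_mx A B) = row_mx (ctmx A) (ctmx B).
Proof. by rewrite /ctmx map_col_mx tr_col_mx. Qed.

Lemma ct_block (C : numClosedFieldType) m1 m2 n1 n2 (A : 'M[C]_(m1,n1))
  (B : 'M[C]_(m1,n2)) (D : 'M[C]_(m2,n1)) (E : 'M[C]_(m2,n2)) :
  ctmx (block_mx A B D E) = block_mx (ctmx A) (ctmx D) (ctmx B) (ctmx E).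
Proof. by rewrite /ctmx map_block_mx tr_block_mx. Qed.

Lemma ct0 (C : numClosedFieldType) m n : ctmx (0 : 'M[C]_(m,n)) = 0.
Proof. by apply/matrixP=> i j; rewrite !ctE !mxE rmorph0. Qed.

Lemma inv_eq (R : comUnitRingType) n (A B : 'M[R]_n) :
  A *m B = 1%:M -> invmx A = B.
Proof.
move=> AB; have [Au Bu] := mulmx1_unit AB.
by rewrite -[invmx A]mulmx1 -AB mulmxA mulVmx // mul1mx.
Qed.

Lemma unit_of_mul (R : comUnitRingType) n (A B : 'M[R]_n) :
  A *m B = 1%:M -> A \in unitmx.
Proof. by move=> AB; have [] := mulmx1_unit AB. Qed.

Lemma ct_unit (C : numClosedFieldType) n (A : 'M[C]_n) :
  A \in unitmx -> ctmx A \in unitmx.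
Proof.
move=> Au; apply: (@unit_of_mul _ _ _ (ctmx (invmx A))).
by rewrite -ct_mul mulVmx // ct1.
Qed.

Lemma ct_inv (C : numClosedFieldType) n (A : 'M[C]_n) :
  A \in unitmx -> ctmx (invmx A) = invmx (ctmx A).
Proof.
move=> Au; apply/esym/inv_eq.
by rewrite -ct_mul mulVmx // ct1.
Qed.

Lemma invmx_conj (R : comUnitRingType) n (T Y : 'M[R]_n) :
  T \in unitmx -> invmx (T *m Y *m invmx T) = T *m invmx Y *m invmx T.
Proof.
move=> Tu; case Yu: (Y \in unitmx).
  apply: inv_eq; rewrite !mulmxA -(mulmxA (T *m Y)) mulVmx // mulmx1.
  by rewrite -(mulmxA T) mulmxV ?Yu // mulmx1 mulmxV.
have Nu : T *m Y *m invmx T \notin unitmx.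
  by rewrite !unitmx_mul Yu andbF.
by rewrite (@invmx_out _ _ (T *m Y *m invmx T)) ?inE // (@invmx_out _ _ Y) ?inE ?Yu.
Qed.

Lemma tens11 (R : comPzRingType) m n :
  (1%:M : 'M[R]_m) *t (1%:M : 'M[R]_n) = 1%:M.
Proof.
apply/matrixP=> i j.
case: (mxtens_indexP i)=> i0 i1; case: (mxtens_indexP j)=> j0 j1.
rewrite tensmxE !mxE (inj_eq (can_inj (@mxtens_indexK m n))) xpair_eqE.
by case: (i0 == j0); case: (i1 == j1); rewrite ?mulr1n ?mulr0n ?mulr1 ?mulr0 ?mul0r.
Qed.

Lemma invmx_tens (R : fieldType) m n (A : 'M[R]_m) (B : 'M[R]_n) :
  A \in unitmx -> B \in unitmx -> invmx (A *t B) = invmx A *t invmx B.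
Proof.
by move=> Au Bu; apply: inv_eq; rewrite tensmx_mul !mulmxV // tens11.
Qed.

Lemma tr_tens (R : comPzRingType) m n (A : 'M[R]_m) (B : 'M[R]_n) :
  \tr (A *t B) = \tr A * \tr B.
Proof.
rewrite /mxtrace mulr_sum; apply: eq_bigr=> i _.
by rewrite !mxE.
Qed.

Lemma tensDl (R : pzRingType) m n p q (A B : 'M[R]_(m,n)) (D : 'M[R]_(p,q)) :
  (A + B) *t D = A *t D + B *t D.
Proof. by apply/matrixP=> i j; rewrite !mxE mulrDl. Qed.

Lemma tensDr (R : pzRingType) m n p q (A : 'M[R]_(m,n)) (B D : 'M[R]_(p,q)) :
  A *t (B + D) = A *t B + A *t D.
Proof. by apply/matrixP=> i j; rewrite !mxE mulrDr. Qed.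

Lemma tensZl (R : comPzRingType) m n p q (a : R) (A : 'M[R]_(m,n)) (D : 'M[R]_(p,q)) :
  (a *: A) *t D = a *: (A *t D).
Proof. by apply/matrixP=> i j; rewrite !mxE mulrA. Qed.

Lemma tensZr (R : comPzRingType) m n p q (a : R) (A : 'M[R]_(m,n)) (D : 'M[R]_(p,q)) :
  A *t (a *: D) = a *: (A *t D).
Proof. by apply/matrixP=> i j; rewrite !mxE mulrCA. Qed.

Lemma tens_sumr (R : pzRingType) m n p q k (A : 'M[R]_(m,n)) (F : 'I_k -> 'M[R]_(p,q)) :
  A *t (\sum_(i < k) F i) = \sum_(i < k) (A *t F i).
Proof.
apply/matrixP=> i j; rewrite !mxE !summxE mulr_sumr.
by apply: eq_bigr=> l _; rewrite !mxE.
Qed.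


Lemma ct_alt (C : numClosedFieldType) m n (A : 'M[C]_(m,n)) :
  map_mx Num.conj A^T = ctmx A.
Proof. by rewrite /ctmx map_trmx. Qed.

Lemma herm_spec (C : numClosedFieldType) n (A : 'M[C]_n) : ctmx A = A ->
  exists (W : 'M[C]_n) (y : 'rV[C]_n),
    W *m ctmx W = 1%:M /\ ctmx W *m W = 1%:M /\ A = W *m diag_mx y *m ctmx W.
Proof.
move=> hA.
have An : A \is normalmx by apply/normalmxP; rewrite ct_alt hA.
move/orthomx_spectralP: An.
set P := spectralmx A; set sp := spectral_diag A => eA.
have PU : P *m ctmx P = 1%:M.
  by have /unitarymxP := spectral_unitarymx A; rewrite ct_alt.
have iP : invmx P = ctmx P by apply: inv_eq.
exists (ctmx P), sp; rewrite ctK; split; first exact: mulmx1C.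
by split => //; rewrite -iP.
Qed.

Lemma diag_delta (R : pzSemiRingType) M (c : 'rV[R]_M) (n : 'I_M) :
  diag_mx c *m delta_mx n n = c 0 n *: delta_mx n n.
Proof.
rewrite mul_diag_mx; apply/matrixP=> i j; rewrite !mxE.
by case: (eqVneq i n) => [->|h] /=; rewrite ?mulr0.
Qed.

Lemma sum_delta (R : pzSemiRingType) M :
  \sum_(n < M) delta_mx n n = (1%:M : 'M[R]_M).
Proof.
apply/matrixP=> i j; rewrite summxE (bigD1 i) //= big1 => [|k hk].
  by rewrite !mxE eqxx /= addr0 eq_sym.
by rewrite !mxE [i == k]eq_sym (negPf hk).
Qed.

Lemma tr_delta (R : pzSemiRingType) M (n : 'I_M) :
  \tr (delta_mx n n : 'M[R]_M) = 1.
Proof.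
rewrite /mxtrace (bigD1 n) //= big1 => [|k hk]; first by rewrite !mxE eqxx addr0.
by rewrite !mxE (negPf hk).
Qed.

Lemma tr_sum (R : pzSemiRingType) n k (F : 'I_k -> 'M[R]_n) :
  \tr (\sum_(i < k) F i) = \sum_(i < k) \tr (F i).
Proof. exact: raddf_sum. Qed.

Lemma bsum (R : fieldType) N M (D X : 'M[R]_N) (a c : 'rV[R]_M) :
  (forall n, (1%:M + c 0 n *: X) \in unitmx) ->
  \tr ((D *t diag_mx a) *m invmx (1%:M + X *t diag_mx c))
  = \sum_n a 0 n * \tr (D *m invmx (1%:M + c 0 n *: X)).
Proof.
move=> hu.
have key : invmx (1%:M + X *t diag_mx c)
    = \sum_n (invmx (1%:M + c 0 n *: X) *t delta_mx n n).
  apply: inv_eq; rewrite mulmx_sumr.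
  transitivity (\sum_(n < M) ((1%:M : 'M[R]_N) *t delta_mx n n)).
    apply: eq_bigr => n _.
    rewrite -tens11 mulmxDl !tensmx_mul !mul1mx diag_delta tensZr -tensZl -tensDl.
    by rewrite scalemxAl -[X in X + _]mul1mx -mulmxDl mulmxV.
  by rewrite -tens_sumr sum_delta tens11.
rewrite key mulmx_sumr tr_sum; apply: eq_bigr => n _.
rewrite tensmx_mul tr_tens diag_delta mxtraceZ tr_delta mulr1 mulrC.
by [].
Qed.

Lemma diag_unit (R : fieldType) n (d : 'rV[R]_n) :
  (forall i, d 0 i != 0) -> diag_mx d \in unitmx.
Proof.
move=> h; rewrite unitmxE det_diag unitfE; apply/prodf_neq0 => i _; exact: h.
Qed.

Lemma diag_inv (R : fieldType) n (d : 'rV[R]_n) :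
  (forall i, d 0 i != 0) -> diag_mx d *m diag_mx (\row_i (d 0 i)^-1) = 1%:M.
Proof.
move=> h; rewrite mulmx_diag -diag_const_mx; congr diag_mx.
by apply/rowP=> i; rewrite !mxE mulfV.
Qed.

Lemma eR_diag (C : numClosedFieldType) (N1 N2 M LS : nat)
  (Ct1 : 'M[C]_N1) (Ct2 : 'M[C]_N2) (Cr : 'M[C]_M)
  (Kq : 'M[C]_LS) (Kr : 'M[C]_M) (U : 'M[C]_M) (a b : 'rV[C]_M)
  (S : 'M[C]_(N1 + N2, LS)) :
  Cr \in unitmx -> Kq \in unitmx -> U *m ctmx U = 1%:M ->
  Cr *m ctmx Cr = U *m diag_mx a *m ctmx U ->
  Kr = U *m diag_mx b *m ctmx U -> (forall n, b 0 n != 0) ->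
  eR Ct1 Ct2 Cr Kq Kr S =
  \tr (((ctmx (blkdiag Ct1 Ct2) *m blkdiag Ct1 Ct2) *t diag_mx a) *m
       invmx (1%:M + (ctmx (S^T *m blkdiag Ct1 Ct2) *m invmx Kq
                        *m (S^T *m blkdiag Ct1 Ct2)) *t diag_mx (\row_n (a 0 n / b 0 n)))).
Proof.
move=> Cru Kqu UU hCr hKr hb.
rewrite /eR /=.
set Ct := blkdiag Ct1 Ct2; set G := S^T *m Ct.
set D := ctmx Ct *m Ct; set X := ctmx G *m invmx Kq *m G.
set c := \row_n (a 0 n / b 0 n).
have UU' : ctmx U *m U = 1%:M := mulmx1C UU.
have Uu : U \in unitmx := unit_of_mul UU.
have Kru : Kr \in unitmx by rewrite hKr !unitmx_mul Uu diag_unit // ct_unit.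
set binv := \row_n (b 0 n)^-1.
have iKr : invmx Kr = U *m diag_mx binv *m ctmx U.
  apply: inv_eq; rewrite hKr !mulmxA -(mulmxA _ (ctmx U)) UU' mulmx1.
  by rewrite -(mulmxA U) diag_inv // mulmx1 UU.
set E := ctmx U *m Cr.
have Eu : E \in unitmx by rewrite unitmx_mul ct_unit.
have hCrE : Cr = U *m E by rewrite /E mulmxA UU mul1mx.
have EE : E *m ctmx E = diag_mx a.
  rewrite /E ct_mul ctK !mulmxA -(mulmxA _ Cr) hCr !mulmxA UU' mul1mx.
  by rewrite -mulmxA UU' mulmx1.
have CrCr : ctmx Cr *m Cr = ctmx E *m E.
  by rewrite {1}hCrE ct_mul -mulmxA.
have CrKCr : ctmx Cr *m invmx Kr *m Cr = ctmx E *m diag_mx binv *m E.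
  rewrite iKr {1}hCrE ct_mul -!mulmxA (mulmxA (ctmx U)) UU' mul1mx.
  by [].
rewrite invmx_tens // ct_tens !tensmx_mul -/X CrKCr CrCr.
have ctEu : ctmx E \in unitmx by exact: ct_unit.
set T := (1%:M : 'M[C]_(N1 + N2)) *t ctmx E.
have Tu : T \in unitmx.
  by apply: (@unit_of_mul _ _ _ (1%:M *t invmx (ctmx E))); rewrite tensmx_mul mulmx1 mulmxV // tens11.
have iT : invmx T = 1%:M *t invmx (ctmx E) by rewrite invmx_tens ?unitmx1 // invmx1.
have aE : diag_mx a *m invmx (ctmx E) = E by rewrite -EE mulmxK.
have h1 : D *t (ctmx E *m E) = T *m (D *t diag_mx a) *m invmx T.
  by rewrite iT !tensmx_mul mul1mx mulmx1 -mulmxA aE.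
have h2 : 1%:M + X *t (ctmx E *m diag_mx binv *m E)
          = T *m (1%:M + X *t diag_mx c) *m invmx T.
  rewrite mulmxDr mulmx1 mulmxDl mulmxV // iT !tensmx_mul mul1mx mulmx1.
  congr (_ + _ *t _); rewrite -!mulmxA; congr (_ *m _).
  have -> : diag_mx c = diag_mx binv *m diag_mx a.
    by rewrite mulmx_diag; congr diag_mx; apply/rowP => i; rewrite !mxE mulrC.
  by rewrite -mulmxA aE.
rewrite h1 h2 invmx_conj // !mulmxA -(mulmxA (T *m _)) mulVmx // mulmx1.
by rewrite mxtrace_mulC !mulmxA mulVmx // mul1mx.
Qed.

Lemma f_spec (C : numClosedFieldType) n (D X W : 'M[C]_n) (y : 'rV[C]_n) (k : C) :
  W *m ctmx W = 1%:M -> ctmx W *m W = 1%:M -> X = W *m diag_mx y *m ctmx W ->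
  (forall j, 1 + k * y 0 j != 0) ->
  (1%:M + k *: X) \in unitmx /\
  \tr (D *m invmx (1%:M + k *: X)) = \sum_j (ctmx W *m D *m W) j j / (1 + k * y 0 j).
Proof.
move=> WW WW' hX hz.
set z := \row_j (1 + k * y 0 j).
have hz' : forall j, z 0 j != 0 by move=> j; rewrite mxE.
have dz : diag_mx z = 1%:M + k *: diag_mx y.
  apply/matrixP=> i j; rewrite !mxE.
  by case: (eqVneq i j) => [->|h]; rewrite ?mulr1n ?mulr0n ?mulr0 ?addr0.
have e : 1%:M + k *: X = W *m diag_mx z *m ctmx W.
  rewrite dz mulmxDr mulmx1 mulmxDl WW hX -scalemxAr -scalemxAl.
  by [].
set zi := \row_j (z 0 j)^-1.
have inv : invmx (1%:M + k *: X) = W *m diag_mx zi *m ctmx W.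
  apply: inv_eq; rewrite e !mulmxA -(mulmxA _ (ctmx W)) WW' mulmx1.
  by rewrite -(mulmxA W) diag_inv // mulmx1 WW.
split.
  by rewrite e !unitmx_mul (unit_of_mul WW) diag_unit // ct_unit // (unit_of_mul WW).
rewrite inv mulmxA mxtrace_mulC !mulmxA mul_mx_diag /mxtrace.
by apply: eq_bigr => j _; rewrite !mxE.
Qed.

Lemma quad (C : numClosedFieldType) n (u : 'cV[C]_n) :
  (ctmx u *m u) 0 0 = \sum_i (u i 0)^* * u i 0.
Proof. by rewrite !mxE; apply: eq_bigr => i _; rewrite !mxE. Qed.

Lemma quad_ge0 (C : numClosedFieldType) n (u : 'cV[C]_n) : 0 <= (ctmx u *m u) 0 0.
Proof. by rewrite quad sumr_ge0 // => i _; rewrite mulrC mul_conjC_ge0. Qed.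

Lemma quad_gt0 (C : numClosedFieldType) n (u : 'cV[C]_n) : u != 0 ->
  0 < (ctmx u *m u) 0 0.
Proof.
move=> un0; rewrite lt_def quad_ge0 andbT; apply: contra un0 => /eqP h0.
apply/eqP/matrixP=> i j; rewrite ord1 mxE.
rewrite quad in h0.
have hge : forall i : 'I_n, true -> 0 <= (u i 0)^* * u i 0.
  by move=> k _; rewrite mulrC mul_conjC_ge0.
have := psumr_eq0P hge h0 (i:=i) isT.
rewrite mulrC => h1; apply/eqP; rewrite -[_ == _]negbK -mul_conjC_gt0 h1 ltxx.
by [].
Qed.

Lemma unit_nz (R : fieldType) n m (A : 'M[R]_n) (e : 'M[R]_(n,m)) :
  A \in unitmx -> e != 0 -> A *m e != 0.
Proof.
move=> Au; apply: contraNneq => h.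
by rewrite -(mulKmx Au e) h mulmx0.
Qed.

Lemma ct_eq0 (C : numClosedFieldType) m n (A : 'M[C]_(m,n)) :
  ctmx A = 0 -> A = 0.
Proof. by move=> h; rewrite -[A]ctK h ct0. Qed.

Lemma posdef_unit (C : numClosedFieldType) n (K : 'M[C]_n) :
  posdef K -> K \in unitmx.
Proof.
case=> hK hpos; apply/negPn/negP => nu.
have /det0P [w wn0 wK] : \det K == 0 by move: nu; rewrite unitmxE unitfE negbK.
have xn0 : ctmx w != 0 by apply: contra wn0 => /eqP /ct_eq0 ->.
have := hpos _ xn0; rewrite ctK wK mul0mx mxE ltxx.
by [].
Qed.

Lemma posdef_inv (C : numClosedFieldType) n (K : 'M[C]_n) (v : 'cV[C]_n) :
  posdef K -> 0 <= (ctmx v *m invmx K *m v) 0 0 /\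
              (v != 0 -> 0 < (ctmx v *m invmx K *m v) 0 0).
Proof.
move=> pK; have Ku := posdef_unit pK; case: pK => hK hpos.
have iKu : invmx K \in unitmx by rewrite unitmx_inv.
case: (eqVneq v 0) => [->|vn0].
  by rewrite mulmx0 mxE lexx; split => //; rewrite eqxx.
set w := invmx K *m v.
have e : ctmx v *m invmx K *m v = ctmx w *m K *m w.
  rewrite /w ct_mul ct_inv // hK -[in RHS](mulmxA (ctmx v)) mulVmx // mulmx1.
  by rewrite mulmxA.
have wn0 : w != 0 by apply: unit_nz.
have hp : 0 < (ctmx w *m K *m w) 0 0 by apply: hpos.
by rewrite e; split => [|_] //; apply: ltW.
Qed.

Lemma ct_delta (C : numClosedFieldType) n (j : 'I_n) :
  ctmx (delta_mx j 0 : 'cV[C]_n) = delta_mx 0 j.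
Proof. by apply/matrixP=> i k; rewrite !ctE !mxE (rmorph_nat Num.conj) andbC. Qed.

Lemma entry_quad (C : numClosedFieldType) n (A : 'M[C]_n) (j : 'I_n) :
  A j j = (ctmx (delta_mx j 0 : 'cV[C]_n) *m A *m (delta_mx j 0 : 'cV[C]_n)) 0 0.
Proof. by rewrite ct_delta -(rowE j A) -(colE j (row j A)) !mxE. Qed.

Lemma char_poly_conj (R : fieldType) n (Mm B : 'M[R]_n) :
  Mm \in unitmx -> char_poly (Mm *m B *m invmx Mm) = char_poly B.
Proof.
move=> Mu; rewrite /char_poly.
set P := map_mx (@polyC R) Mm; set Pi := map_mx (@polyC R) (invmx Mm).
have PPi : P *m Pi = 1%:M by rewrite -map_mxM mulmxV // map_mx1.
have -> : char_poly_mx (Mm *m B *m invmx Mm) = P *m char_poly_mx B *m Pi.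
  rewrite /char_poly_mx mulmxBr mulmxBl scalar_mxC -(mulmxA ('X%:M)) PPi mulmx1.
  by congr (_ - _); rewrite /P /Pi !map_mxM.
rewrite !det_mulmx mulrC mulrA -det_mulmx mulrC.
by rewrite [Pi *m P]mulmx1C // det1 mulr1.
Qed.

Lemma eig_perm (C : numClosedFieldType) n (A Mm : 'M[C]_n) (d s : 'rV[C]_n) :
  Mm \in unitmx -> A = Mm *m diag_mx d *m invmx Mm -> eigvals_of A s ->
  perm_eq [seq d 0 i | i <- enum 'I_n] [seq s 0 i | i <- enum 'I_n].
Proof.
move=> Mu hA; rewrite /eigvals_of hA char_poly_conj // char_poly_trig ?diag_mx_is_trig //.
move=> e; apply: prod_XsubC_eq; rewrite !big_map.
have e1 : \prod_(i < n) ('X - (d 0 i)%:P) = \prod_(i < n) ('X - (s 0 i)%:P).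
  rewrite -e; apply: eq_bigr => i _; by rewrite mxE eqxx mulr1n.
move: e1; rewrite /index_enum /=.
case: index_enum_key => /=.
done.
Qed.

Lemma rank_diag_ge (F : fieldType) n (y : 'rV[F]_n) :
  (#|[pred j : 'I_n | (y 0 j != 0)%R]| <= \rank (diag_mx y))%N.
Proof.
set A := [pred j : 'I_n | (y 0 j != 0)%R].
pose f := (@enum_val _ A).
have eSub : rowsub f (colsub f (diag_mx y)) = diag_mx (\row_i y 0 (f i)).
  apply/matrixP => i j; rewrite !mxE (inj_eq enum_val_inj).
  by case: (eqVneq i j) => [->|h]; rewrite ?mulr1n ?mulr0n.
have rk : \rank (rowsub f (colsub f (diag_mx y))) = #|A|.
  rewrite eSub mxrank_unit // diag_unit // => i; rewrite mxE.
  by have := enum_valP i.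
rewrite -rk rowsubE (leq_trans (mxrankM_maxr _ _)) //.
have -> : colsub f (diag_mx y) = diag_mx y *m colsub f 1%:M.
  by rewrite mulmx_colsub mulmx1.
exact: mxrankM_maxl.
Qed.

Lemma count_ge (R : numDomainType) N L :
  \sum_(m < N | (L <= m)%N) (1 : R) = (N - L)%:R.
Proof.
have := @big_geq_mkord R 0 +%R L N xpredT (fun _ => (1:R)).
rewrite sumr_const_nat => <-; by [].
Qed.

Lemma sum_map_enum (R : nmodType) N (g : 'I_N -> R) (F : R -> R) :
  \sum_(i < N) F (g i) = \sum_(x <- [seq g i | i <- enum 'I_N]) F x.
Proof. by rewrite big_map big_enum. Qed.

Lemma rearr (C : numClosedFieldType) N L (s0 st p : 'I_N -> C) :
  (L < N)%N ->
  (forall i, 0 <= s0 i) -> (forall i, 0 <= p i <= 1) ->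
  (N - L)%:R <= \sum_i p i ->
  perm_eq [seq s0 i | i <- enum 'I_N] [seq st i | i <- enum 'I_N] ->
  (forall i j : 'I_N, (i <= j)%N -> st j <= st i) ->
  \sum_(m < N | (L <= m)%N) st m <= \sum_i s0 i * p i.
Proof.
move=> hL s0p hp hsum pe hst.
set t := st (Ordinal hL).
have : t \in [seq s0 i | i <- enum 'I_N] by rewrite (perm_mem pe) map_f ?mem_enum.
case/mapP => i0 _ et.
have t0 : 0 <= t by rewrite et.
pose h (x : C) := if x <= t then x - t else 0.
have stepa : \sum_i (h (s0 i) + t * p i) <= \sum_i s0 i * p i.
  apply: ler_sum => i _.
  have -> : s0 i * p i = (s0 i - t) * p i + t * p i by rewrite mulrBl subrK.
  rewrite lerD2r /h; case: ifP => H.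
  - have /andP [p0 p1] := hp i.
    rewrite -subr_ge0 -[X in _ - X]mulr1 -mulrBr.
    by rewrite mulr_le0 // ?subr_le0.
  - have lt : t < s0 i by rewrite real_ltNge ?H ?ger0_real.
    have /andP [p0 _] := hp i.
    by rewrite mulr_ge0 // subr_ge0 ltW.
have stepb : \sum_i h (s0 i) = \sum_i h (st i).
  by rewrite (sum_map_enum s0 h) (sum_map_enum st h) (perm_big _ pe).
have stepd : \sum_i h (st i) = \sum_(m < N | (L <= m)%N) st m - t * (N - L)%:R.
  rewrite (bigID (fun m : 'I_N => (L <= m)%N)) /= [X in _ + X]big1 ?addr0.
    rewrite -count_ge mulr_sumr -sumrB; apply: eq_bigr => m hm.
    by rewrite /h mulr1 hst.
  move=> m; rewrite -ltnNge => hm; rewrite /h; case: ifP => // H.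
  have H2 : t <= st m by apply: hst; rewrite /= ltnW.
  by rewrite (@le_anti _ _ (st m) t) ?H ?H2 // subrr.
apply: le_trans stepa; rewrite big_split /= stepb stepd -mulr_sumr.
by rewrite -addrA lerDl addrC subr_ge0 ler_wpM2l.
Qed.

Lemma weight_bound (C : numClosedFieldType) N L (D W V : 'M[C]_N) (y s0 st : 'rV[C]_N) :
  (L < N)%N -> ctmx W *m W = 1%:M -> W *m ctmx W = 1%:M ->
  V *m ctmx V = 1%:M -> ctmx V *m V = 1%:M ->
  D = V *m diag_mx s0 *m ctmx V -> (forall i, 0 <= s0 0 i) ->
  (N - L <= #|[pred j : 'I_N | (y 0 j == 0)%R]|)%N ->
  perm_eq [seq s0 0 i | i <- enum 'I_N] [seq st 0 i | i <- enum 'I_N] ->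
  (forall i j : 'I_N, (i <= j)%N -> st 0 j <= st 0 i) ->
  \sum_(m < N | (L <= m)%N) st 0 m <= \sum_(j < N | y 0 j == 0) (ctmx W *m D *m W) j j.
Proof.
move=> hL WW' WW VV VV' hD s0p hZ pe hst.
set Q := ctmx V *m W.
have QQ : Q *m ctmx Q = 1%:M.
  by rewrite /Q ct_mul ctK mulmxA -(mulmxA _ W) WW mulmx1 VV'.
have QQ' : ctmx Q *m Q = 1%:M.
  by rewrite /Q ct_mul ctK mulmxA -(mulmxA _ V) VV mulmx1 WW'.
have eD : ctmx W *m D *m W = ctmx Q *m diag_mx s0 *m Q.
  by rewrite hD /Q ct_mul ctK !mulmxA.
clearbody Q.
pose q i j := (Q i j)^* * Q i j.
have q0 : forall i j, 0 <= q i j by move=> i j; rewrite /q mulrC mul_conjC_ge0.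
have eentry : forall j, (ctmx W *m D *m W) j j = \sum_i s0 0 i * q i j.
  move=> j; rewrite eD mxE; apply: eq_bigr => i _.
  by rewrite mul_mx_diag !mxE /q mulrAC mulrC.
pose p i := \sum_(j < N | y 0 j == 0) q i j.
have hsum : \sum_(j < N | y 0 j == 0) (ctmx W *m D *m W) j j = \sum_i s0 0 i * p i.
  under eq_bigr => j _ do rewrite eentry.
  rewrite exchange_big /=; apply: eq_bigr => i _.
  by rewrite /p mulr_sumr.
rewrite hsum; apply: (rearr (s0 := fun i => s0 0 i) (st := fun i => st 0 i)) => //.
- move=> i; apply/andP; split; first by apply: sumr_ge0 => j _.
  have e1 : \sum_j q i j = 1.
    have := congr1 (fun M : 'M[C]_N => M i i) QQ; rewrite !mxE eqxx mulr1n => <-.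
    by apply: eq_bigr => j _; rewrite /q !mxE mulrC.
  rewrite -e1 [X in _ <= X](bigID (fun j => y 0 j == 0)) /= lerDl.
  by apply: sumr_ge0 => j _.
- rewrite /p exchange_big /=.
  have e2 : forall j, \sum_i q i j = 1.
    move=> j; have := congr1 (fun M : 'M[C]_N => M j j) QQ'; rewrite !mxE eqxx mulr1n => <-.
    by apply: eq_bigr => i _; rewrite /q !mxE.
  under eq_bigr => j _ do rewrite e2.
  by rewrite sumr_const ler_nat.
Qed.

Lemma P1 (C : numClosedFieldType) N (g y : 'I_N -> C) (k : C) :
  0 < k -> (forall j, 0 <= y j) -> (forall j, 0 <= g j) ->
  \sum_(j < N | y j == 0) g j <= \sum_j g j / (1 + k * y j).
Proof.
move=> k0 y0 g0; rewrite [X in _ <= X](bigID (fun j => y j == 0)) /=.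
have -> : \sum_(j < N | y j == 0) g j / (1 + k * y j) = \sum_(j < N | y j == 0) g j.
  by apply: eq_bigr => j /eqP ->; rewrite mulr0 addr0 invr1 mulr1.
rewrite lerDl; apply: sumr_ge0 => j _; rewrite divr_ge0 //.
by rewrite addr_ge0 // mulr_ge0 // ltW.
Qed.

Lemma pos_den (C : numClosedFieldType) (k y : C) : 0 <= k -> 0 <= y -> 0 < 1 + k * y.
Proof.
move=> k0 y0; apply: (lt_le_trans ltr01); rewrite lerDl mulr_ge0 //.
Qed.

Lemma eR_expand (C : numClosedFieldType) (N1 N2 M LS : nat)
  (Ct1 : 'M[C]_N1) (Ct2 : 'M[C]_N2) (Cr : 'M[C]_M)
  (Kq : 'M[C]_LS) (Kr : 'M[C]_M) (U : 'M[C]_M) (a b : 'rV[C]_M)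
  (S : 'M[C]_(N1 + N2, LS)) (W : 'M[C]_(N1 + N2)) (y : 'rV[C]_(N1 + N2)) :
  Cr \in unitmx -> Kq \in unitmx -> U *m ctmx U = 1%:M ->
  Cr *m ctmx Cr = U *m diag_mx a *m ctmx U ->
  Kr = U *m diag_mx b *m ctmx U -> (forall n, 0 < b 0 n) -> (forall n, 0 < a 0 n) ->
  W *m ctmx W = 1%:M -> ctmx W *m W = 1%:M ->
  ctmx (S^T *m blkdiag Ct1 Ct2) *m invmx Kq *m (S^T *m blkdiag Ct1 Ct2)
     = W *m diag_mx y *m ctmx W ->
  (forall j, 0 <= y 0 j) ->
  eR Ct1 Ct2 Cr Kq Kr S =
  \sum_n a 0 n * \sum_j (ctmx W *m (ctmx (blkdiag Ct1 Ct2) *m blkdiag Ct1 Ct2) *m W) j j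
                          / (1 + (a 0 n / b 0 n) * y 0 j).
Proof.
move=> Cru Kqu UU hZ hK b0 a0 WW WW' hX y0.
have bn0 : forall n, b 0 n != 0 by move=> n; rewrite gt_eqF.
rewrite (eR_diag Ct1 Ct2 S Cru Kqu UU hZ hK bn0) hX.
have hz : forall n j, 1 + (a 0 n / b 0 n) * y 0 j != 0.
  by move=> n j; rewrite gt_eqF // pos_den // ltW // divr_gt0.
set D := ctmx (blkdiag Ct1 Ct2) *m blkdiag Ct1 Ct2.
rewrite bsum => [|n]; last first.
  by rewrite mxE; have [] := f_spec D WW WW' (erefl _) (hz n).
apply: eq_bigr => n _; rewrite mxE.
by have [_ ->] := f_spec D WW WW' (erefl _) (hz n).
Qed.

Lemma blk_unit (C : numClosedFieldType) n1 n2 (A : 'M[C]_n1) (B : 'M[C]_n2) :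
  A \in unitmx -> B \in unitmx -> blkdiag A B \in unitmx.
Proof.
by rewrite !unitmxE /blkdiag det_ublock unitrM => -> ->.
Qed.

Lemma blk_ct (C : numClosedFieldType) n1 n2 (A : 'M[C]_n1) (B : 'M[C]_n2) :
  blkdiag (A *m ctmx A) (B *m ctmx B) = blkdiag A B *m ctmx (blkdiag A B).
Proof.
by rewrite /blkdiag ct_block !ct0 mulmx_block !mulmx0 !mul0mx !addr0 !add0r.
Qed.

Lemma X_herm (C : numClosedFieldType) L N (G : 'M[C]_(L, N)) (K : 'M[C]_L) :
  posdef K -> ctmx (ctmx G *m invmx K *m G) = ctmx G *m invmx K *m G.
Proof.
move=> pK; have Ku := posdef_unit pK; case: pK => hK _.
by rewrite !ct_mul ctK ct_inv // hK mulmxA.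
Qed.

Lemma y_quad (C : numClosedFieldType) L N (G : 'M[C]_(L, N)) (K : 'M[C]_L)
  (W : 'M[C]_N) (y : 'rV[C]_N) (j : 'I_N) :
  ctmx W *m W = 1%:M -> ctmx G *m invmx K *m G = W *m diag_mx y *m ctmx W ->
  y 0 j = (ctmx (G *m W *m (delta_mx j 0 : 'cV[C]_N)) *m invmx K *m (G *m W *m (delta_mx j 0 : 'cV[C]_N))) 0 0.
Proof.
move=> WW' hX.
have e : ctmx W *m (ctmx G *m invmx K *m G) *m W = diag_mx y.
  by rewrite hX !mulmxA WW' mul1mx -mulmxA WW' mulmx1.
have -> : y 0 j = diag_mx y j j by rewrite mxE eqxx mulr1n.
by rewrite -e entry_quad !ct_mul !mulmxA.
Qed.

Lemma usub_ct (C : numClosedFieldType) m1 m2 n (A : 'M[C]_(m1 + m2, n)) :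
  usubmx A *m ctmx (usubmx A) = ulsubmx (A *m ctmx A).
Proof. by rewrite -{3 4}(vsubmxK A) ct_col mul_col_row block_mxKul. Qed.

Lemma dsub_ct (C : numClosedFieldType) m1 m2 n (A : 'M[C]_(m1 + m2, n)) :
  dsubmx A *m ctmx (dsubmx A) = drsubmx (A *m ctmx A).
Proof. by rewrite -{3 4}(vsubmxK A) ct_col mul_col_row block_mxKdr. Qed.

Lemma trZ (R : pzSemiRingType) m n (a : R) (A : 'M[R]_(m,n)) : (a *: A)^T = a *: A^T.
Proof. by apply/matrixP=> i j; rewrite !mxE. Qed.

Lemma eR_q_form (C : numClosedFieldType) (N1 N2 M L : nat)
  (Ct1 : 'M[C]_N1) (Ct2 : 'M[C]_N2) (Cr : 'M[C]_M) (Kr : 'M[C]_M) (q : C)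
  (S : 'M[C]_(N1 + N2, L)) :
  q != 0 -> Kr \in unitmx ->
  eR Ct1 Ct2 Cr (q%:M : 'M[C]_L) Kr S =
  \tr ((ctmx (blkdiag Ct1 Ct2) *m blkdiag Ct1 Ct2) *t (ctmx Cr *m Cr) *m
       invmx (1%:M + (q^-1 *: (ctmx (blkdiag Ct1 Ct2) *m (S *m ctmx S)^T *m blkdiag Ct1 Ct2))
                      *t (ctmx Cr *m invmx Kr *m Cr))).
Proof.
move=> q0 Kru.
have qu : (q%:M : 'M[C]_L) \in unitmx.
  by rewrite unitmxE det_scalar unitrX // unitfE.
have e : (q^-1 *: ctmx (S^T *m blkdiag Ct1 Ct2)) *m (S^T *m blkdiag Ct1 Ct2)
   = q^-1 *: (ctmx (blkdiag Ct1 Ct2) *m (S *m ctmx S)^T *m blkdiag Ct1 Ct2).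
  rewrite -scalemxAl ct_mul; congr (_ *: _).
  by rewrite trmx_mul ct_tr /ctmx trmxK !mulmxA.
by rewrite /eR /= invmx_tens // ct_tens !tensmx_mul invmx_scalar mul_mx_scalar e.
Qed.

Lemma scal_bound (C : numClosedFieldType) (a g c y T : C) :
  0 <= a -> 0 <= g -> 0 < c -> 0 < y -> 1 <= T ->
  a * (g / (1 + c * ((T * T) * y))) <= a * g / (c * y) / T.
Proof.
move=> a0 g0 c0 y0 T1.
have T0 : 0 < T by apply: lt_le_trans ltr01 T1.
have cyT : 0 < c * y * T by rewrite !mulr_gt0.
have den : 0 < 1 + c * ((T * T) * y) by rewrite pos_den // ?mulr_ge0 ?ltW.
have hle : c * y * T <= 1 + c * ((T * T) * y).
  have h2 : c * y * T <= c * y * T * T by rewrite ler_peMr // ltW.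
  have -> : c * ((T * T) * y) = (c * y * T) * T by ring.
  by apply: (le_trans h2); rewrite -subr_ge0 addrK ler01.
rewrite mulrA -[in X in _ <= X]mulrA -invfM; apply: ler_wpM2l; first exact: mulr_ge0.
by rewrite lef_pV2 ?posrE.
Qed.

Lemma delta_nz (C : numClosedFieldType) n (j : 'I_n) : (delta_mx j 0 : 'cV[C]_n) != 0.
Proof.
apply/negP => /eqP /matrixP /(_ j 0); rewrite !mxE !eqxx /= => /eqP.
by rewrite oner_eq0.
Qed.

Lemma scaleX (C : numClosedFieldType) L N (G : 'M[C]_(L, N)) (K : 'M[C]_L) (T : C) :
  T^* = T -> ctmx (T *: G) *m K *m (T *: G) = (T * T) *: (ctmx G *m K *m G).
Proof.
by move=> hT; rewrite ct_scale hT -!scalemxAl -scalemxAr scalerA.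
Qed.

Lemma diagZ (R : pzSemiRingType) n (c : R) (y : 'rV[R]_n) :
  diag_mx (c *: y) = c *: diag_mx y.
Proof. by apply/matrixP=> i j; rewrite !mxE mulrnAr. Qed.

Unset Implicit Arguments.

Theorem lemma1 (C : numClosedFieldType) (N1 N2 M LS : nat)
  (Ct1 : 'M[C]_N1) (Ct2 : 'M[C]_N2) (Cr : 'M[C]_M)
  (Kq : 'M[C]_LS) (Kr : 'M[C]_M) :
  Ct1 \in unitmx -> Ct2 \in unitmx -> Cr \in unitmx ->
  posdef Kq -> posdef Kr ->
  same_eigvecs (Cr *m ctmx Cr) Kr ->
  (* (i) *)
  ((N1 + N2 <= LS)%N ->
     forall eps : C, 0 < eps ->
       exists S : 'M[C]_(N1 + N2, LS), eR Ct1 Ct2 Cr Kq Kr S < eps)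
  /\
  (* (ii) *)
  ((LS < N1 + N2)%N ->
     forall (sr : 'rV[C]_M) (st : 'rV[C]_(N1 + N2)),
       eigvals_of (Cr *m ctmx Cr) sr ->
       eigvals_of (blkdiag (Ct1 *m ctmx Ct1) (Ct2 *m ctmx Ct2)) st ->
       (forall i j : 'I_(N1 + N2), (i <= j)%N -> st 0 j <= st 0 i) ->
       forall S : 'M[C]_(N1 + N2, LS),
         (\sum_(n < M) sr 0 n) * (\sum_(m < N1 + N2 | (LS <= m)%N) st 0 m)
           <= eR Ct1 Ct2 Cr Kq Kr S)
  /\
  (* (iii) *)
  (forall (q tau1 tau2 : C), 0 < q -> 0 < tau1 -> 0 < tau2 ->
     Kq = q%:M ->
     forall Sopt : 'M[C]_(N1 + N2, LS),
       pow_mx (usubmx Sopt) <= tau1 -> pow_mx (dsubmx Sopt) <= tau2 ->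
       (forall S : 'M[C]_(N1 + N2, LS),
          pow_mx (usubmx S) <= tau1 -> pow_mx (dsubmx S) <= tau2 ->
          eR Ct1 Ct2 Cr Kq Kr Sopt <= eR Ct1 Ct2 Cr Kq Kr S) ->
       forall r : nat, \rank Sopt = r ->
       exists (T1 : 'M[C]_(N1, r)) (T2 : 'M[C]_(N2, r)),
         pow_mx T1 = pow_mx (usubmx Sopt) /\
         pow_mx T2 = pow_mx (dsubmx Sopt) /\
         eR Ct1 Ct2 Cr (q%:M : 'M[C]_r) Kr (col_mx T1 T2)
           = eR Ct1 Ct2 Cr Kq Kr Sopt).
Proof.
move=> Ct1u Ct2u Cru pKq pKr [U [a [b [UU [hZr hKr]]]]].
rewrite /unitary in UU.
have Kqu := posdef_unit pKq.
have Kru := posdef_unit pKr.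
have UU' : ctmx U *m U = 1%:M := mulmx1C UU.
have Uu : U \in unitmx := unit_of_mul UU.
have b0 : forall n, 0 < b 0 n.
  move=> n.
  have e : ctmx U *m Kr *m U = diag_mx b.
    by rewrite hKr !mulmxA UU' mul1mx -mulmxA UU' mulmx1.
  have -> : b 0 n = diag_mx b n n by rewrite mxE eqxx mulr1n.
  rewrite -e entry_quad.
  have -> : ctmx (delta_mx n 0 : 'cV[C]_M) *m (ctmx U *m Kr *m U) *m (delta_mx n 0 : 'cV[C]_M)
          = ctmx (U *m (delta_mx n 0 : 'cV[C]_M)) *m Kr *m (U *m (delta_mx n 0 : 'cV[C]_M)).
    by rewrite ct_mul !mulmxA.
  by case: pKr => _; apply; apply: unit_nz => //; exact: delta_nz.
have a0 : forall n, 0 < a 0 n.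
  move=> n.
  have e : ctmx U *m (Cr *m ctmx Cr) *m U = diag_mx a.
    by rewrite hZr !mulmxA UU' mul1mx -mulmxA UU' mulmx1.
  have -> : a 0 n = diag_mx a n n by rewrite mxE eqxx mulr1n.
  rewrite -e entry_quad.
  have -> : ctmx (delta_mx n 0 : 'cV[C]_M) *m (ctmx U *m (Cr *m ctmx Cr) *m U) *m (delta_mx n 0 : 'cV[C]_M)
          = ctmx (ctmx Cr *m U *m (delta_mx n 0 : 'cV[C]_M)) *m (ctmx Cr *m U *m (delta_mx n 0 : 'cV[C]_M)).
    by rewrite !ct_mul ctK !mulmxA.
  apply: quad_gt0; rewrite -mulmxA; apply: unit_nz; first exact: ct_unit.
  by apply: unit_nz => //; exact: delta_nz.
have Ctu : blkdiag Ct1 Ct2 \in unitmx := blk_unit Ct1u Ct2u.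
set Ct := blkdiag Ct1 Ct2 in Ctu *.
set D := ctmx Ct *m Ct.
have g0 : forall (W : 'M[C]_(N1 + N2)) j, 0 <= (ctmx W *m D *m W) j j.
  move=> W j; rewrite entry_quad.
  have -> : ctmx (delta_mx j 0 : 'cV[C]_(N1 + N2)) *m (ctmx W *m D *m W) *m (delta_mx j 0 : 'cV[C]_(N1 + N2))
          = ctmx (Ct *m W *m (delta_mx j 0 : 'cV[C]_(N1 + N2))) *m (Ct *m W *m (delta_mx j 0 : 'cV[C]_(N1 + N2))).
    by rewrite /D !ct_mul !mulmxA.
  exact: quad_ge0.
split; [|split].
- move=> hN eps eps0.
  set P0 := (pid_mx (N1 + N2) : 'M[C]_(N1 + N2, LS)).
  set H0 := P0^T *m Ct.
  have [W [y [WW [WW' hX0]]]] := herm_spec (X_herm H0 pKq).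
  have Wu : W \in unitmx := unit_of_mul WW.
  have hLf : (invmx Ct *m P0) *m H0 = 1%:M.
    rewrite /H0 mulmxA -(mulmxA (invmx Ct)) tr_pid_mx mul_pid_mx minnn.
    by rewrite (minn_idPr hN) pid_mx_1 mulmx1 mulVmx.
  have ypos : forall j, 0 < y 0 j.
    move=> j; rewrite (y_quad j WW' hX0).
    have [_ h] := posdef_inv (H0 *m W *m (delta_mx j 0 : 'cV[C]_(N1 + N2))) pKq.
    apply: h.
    have hWe : W *m (delta_mx j 0 : 'cV[C]_(N1 + N2)) != 0 by apply: unit_nz => //; exact: delta_nz.
    apply: contra hWe => /eqP hv; apply/eqP.
    by rewrite -[W *m _]mul1mx -hLf -(mulmxA (invmx Ct *m P0)) (mulmxA H0) hv mulmx0.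
  set g := fun j => (ctmx W *m D *m W) j j.
  set K := \sum_(n < M) \sum_(j < N1 + N2) a 0 n * g j / (a 0 n / b 0 n * y 0 j).
  have K0 : 0 <= K.
    apply: sumr_ge0 => n _; apply: sumr_ge0 => j _.
    apply: divr_ge0; first by apply: mulr_ge0; [exact: ltW | exact: g0].
    by apply: mulr_ge0; apply: ltW; [exact: divr_gt0 | exact: ypos].
  set T := K / eps + 1.
  have T1 : 1 <= T by rewrite /T lerDr divr_ge0 // ltW.
  have T0 : 0 < T by apply: lt_le_trans ltr01 T1.
  have Tc : T^* = T by apply: conj_Creal; apply: gtr0_real.
  exists (T *: P0).
  have hXS : ctmx ((T *: P0)^T *m Ct) *m invmx Kq *m ((T *: P0)^T *m Ct)
           = W *m diag_mx ((T * T) *: y) *m ctmx W.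
    rewrite trZ -scalemxAl scaleX // -/H0 hX0 diagZ -scalemxAr -scalemxAl.
    by [].
  have y0' : forall j, 0 <= ((T * T) *: y) 0 j.
    by move=> j; rewrite mxE; apply: mulr_ge0; [apply: mulr_ge0|]; apply: ltW.
  rewrite (@eR_expand _ _ _ _ _ Ct1 Ct2 Cr Kq Kr U a b (T *: P0) W ((T * T) *: y)
             Cru Kqu UU hZr hKr b0 a0 WW WW' hXS y0') -/Ct -/D.
  apply: (le_lt_trans (y := K / T)).
    rewrite /K mulr_suml; apply: ler_sum => n _; rewrite mulr_sumr mulr_suml.
    apply: ler_sum => j _; rewrite [((T * T) *: y) 0 j]mxE.
    apply: scal_bound => //; [exact: ltW | exact: divr_gt0].
  rewrite ltr_pdivrMr // /T mulrDr mulr1 mulrCA divff ?gt_eqF // mulr1.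
  by rewrite ltrDl.
- move=> hL sr st hsr hst hsort S.
  set G := S^T *m Ct.
  have [W [y [WW [WW' hX]]]] := herm_spec (X_herm G pKq).
  have Wu : W \in unitmx := unit_of_mul WW.
  have y0 : forall j, 0 <= y 0 j.
    move=> j; rewrite (y_quad j WW' hX).
    by have [] := posdef_inv (G *m W *m (delta_mx j 0 : 'cV[C]_(N1 + N2))) pKq.
  rewrite (@eR_expand _ _ _ _ _ Ct1 Ct2 Cr Kq Kr U a b S W y Cru Kqu UU hZr hKr b0 a0 WW WW' hX y0) -/Ct -/D.
  have Dh : ctmx D = D by rewrite /D ct_mul ctK.
  have [V [s0 [VV [VV' hD]]]] := herm_spec Dh.
  have Vu : V \in unitmx := unit_of_mul VV.
  have s00 : forall i, 0 <= s0 0 i.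
    move=> i; have -> : s0 0 i = (ctmx V *m D *m V) i i.
      by rewrite hD !mulmxA VV' mul1mx -mulmxA VV' mulmx1 mxE eqxx mulr1n.
    exact: g0.
  have iCV : invmx (Ct *m V) = ctmx V *m invmx Ct.
    by apply: inv_eq; rewrite mulmxA -(mulmxA Ct) VV mulmx1 mulmxV.
  have pe : perm_eq [seq s0 0 i | i <- enum 'I_(N1 + N2)] [seq st 0 i | i <- enum 'I_(N1 + N2)].
    apply: (eig_perm (Mm := Ct *m V) _ _ hst); first by rewrite unitmx_mul Ctu.
    rewrite blk_ct -/Ct iCV !mulmxA -(mulmxA Ct V (diag_mx s0)).
    rewrite -(mulmxA Ct (V *m diag_mx s0) (ctmx V)) -hD /D mulmxA.
    by rewrite -(mulmxA (Ct *m ctmx Ct)) mulmxV // mulmx1.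
  have pa : perm_eq [seq a 0 i | i <- enum 'I_M] [seq sr 0 i | i <- enum 'I_M].
    apply: (eig_perm (Mm := U) Uu _ hsr).
    by rewrite hZr (inv_eq UU).
  have sa : \sum_(n < M) sr 0 n = \sum_(n < M) a 0 n.
    rewrite (sum_map_enum (fun n => sr 0 n) id) (sum_map_enum (fun n => a 0 n) id).
    by rewrite (perm_big _ pa).
  have hcnt : (N1 + N2 - LS <= #|[pred j : 'I_(N1 + N2) | (y 0 j == 0)%R]|)%N.
    have r1 := rank_diag_ge y.
    have r2 : (\rank (diag_mx y) <= LS)%N.
      have -> : diag_mx y = ctmx W *m (ctmx G *m invmx Kq *m G) *m W.
        by rewrite hX !mulmxA WW' mul1mx -mulmxA WW' mulmx1.
      apply: (leq_trans (mxrankM_maxl _ _)); apply: (leq_trans (mxrankM_maxr _ _)).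
      apply: (leq_trans (mxrankM_maxr _ _)); exact: rank_leq_row.
    have c1 := cardC [pred j : 'I_(N1 + N2) | (y 0 j == 0)%R].
    have c2 : #|[predC [pred j : 'I_(N1 + N2) | (y 0 j == 0)%R]]|
            = #|[pred j : 'I_(N1 + N2) | (y 0 j != 0)%R]|.
      by apply: eq_card => j; rewrite !inE.
    rewrite card_ord c2 in c1; rewrite leq_subLR -[X in (X <= _)%N]c1 addnC leq_add2r; exact: leq_trans r1 r2.
  rewrite sa mulr_suml; apply: ler_sum => n _; rewrite ler_pM2l //.
  apply: le_trans (P1 (g := fun j => (ctmx W *m D *m W) j j) (y := fun j => y 0 j) _ _ _).
  + exact: (weight_bound hL WW' WW VV VV' hD s00 hcnt pe hsort).
  + by rewrite divr_gt0.
  + exact: y0.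
  + by move=> j; apply: g0.
- move=> q tau1 tau2 q0 _ _ hKq Sopt _ _ _ r hr; subst r.
  rewrite hKq.
  set B := schmidt (row_base Sopt).
  have BB : B *m ctmx B = 1%:M.
    have /unitarymxP := schmidt_unitarymx (row_base Sopt) (rank_leq_col Sopt).
    by rewrite ct_alt.
  have sub : (Sopt <= B)%MS.
    apply: submx_trans (schmidt_sub _); by rewrite eq_row_base.
  set T0 := Sopt *m pinvmx B.
  have eT : T0 *m B = Sopt := mulmxKpV sub.
  have TT : T0 *m ctmx T0 = Sopt *m ctmx Sopt.
    by rewrite -[in RHS]eT ct_mul mulmxA -(mulmxA T0) BB mulmx1.
  exists (usubmx T0), (dsubmx T0); rewrite vsubmxK.
  split; first by rewrite /pow_mx !usub_ct TT.
  split; first by rewrite /pow_mx !dsub_ct TT.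
  by rewrite !eR_q_form ?gt_eqF // TT.
Qed.
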